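(* Let $i,j,k$ be integers with $i\ge j\ge 0$ and $k\ge 1-j$. Then (a) $\displaystyle\sum_{r=j}^{i}(-1)^{i-r}\binom{r+k-1}{r-j}\,b_{i,r,k}=b_{i,j,0}$; (b) $\displaystyle\sum_{r=j}^{i}(-1)^{i-r}\binom{r+k-1}{r-j}\,b_{i,r,0}=b_{i,j,k}$.
   Context: For integers $i\ge0$, $j\ge0$ and real $k$, $b_{i,j,k}=\sum_{r=0}^{j}\binom{j}{r}(-1)^{j-r}(r+k)^i$, with the convention $0^0=1$. *)

(* Defs.v *)
From mathcomp Require Import all_boot all_order all_algebra.
Set Implicit Arguments. Unset Strict Implicit. Unset Printing Implicit Defensive.
Import Order.TTheory GRing.Theory Num.Theory.
Local Open Scope ring_scope.

(* b_{i,j,k} = sum_{r=0}^{j} C(j,r) (-1)^{j-r} (r+k)^i, evaluated at an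
   integer k (the theorem only uses integer k).  The convention 0^0 = 1 is
   built into MathComp's [x ^+ 0 = 1]. *)
Definition b (i j : nat) (k : int) : int :=
  \sum_(0 <= r < j.+1) ('C(j, r))%:Z * (-1) ^+ (j - r)%N * (r%:Z + k) ^+ i.

(* Main.v *)
Require Import Defs.
From mathcomp Require Import all_boot all_order all_algebra.
From mathcomp Require Import zify ring lra.
From Stdlib Require Import FunctionalExtensionality.
Import Order.TTheory GRing.Theory Num.Theory.
Local Open Scope ring_scope.

Definition D (h : int -> int) : int -> int := fun y => h (y + 1) - h y.
Definition Dn n h := iter n D h.

Lemma DnS n h : Dn n.+1 h = D (Dn n h). Proof. by []. Qed.
Lemma DnSr n h : Dn n.+1 h = Dn n (D h). Proof. exact: iterSr. Qed.

Lemma DnE n h y : Dn n h y = \sum_(r < n.+1) (-1)^+(n - r) * ('C(n, r))%:Z * h (y + r%:Z).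
Proof.
elim: n y => [|n IH] y.
  by rewrite big_ord_recl big_ord0 /= expr0 !mul1r !addr0.
rewrite DnS /D !IH.
rewrite [in RHS]big_ord_recl /= subn0 bin0 mulr1.
under [in RHS]eq_bigr => s _.
  rewrite /bump /= add1n binS PoszD mulrDr mulrDl.
  over.
rewrite big_split /= [X in _ = _ + X]addrC addrCA; congr (_ + _).
  by apply: eq_bigr => s _; rewrite subSS; congr (_ * _); congr h; rewrite -[(nat_of_ord s).+1]addn1 PoszD; ring.
rewrite [in RHS]big_ord_recr /= bin_small // mulr0 mul0r !addr0.
rewrite big_ord_recl /= subn0 bin0 mulr1 !addr0 opprD exprS mulN1r mulNr.
congr (_ + _).
rewrite -sumrN; apply: eq_bigr => s _.
rewrite /bump /= add1n subSS -(subnSK (ltn_ord s)) exprS mulN1r. by rewrite !mulNr.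
Qed.

Lemma Dn_sum n m (F : 'I_m -> int -> int) y :
  Dn n (fun x => \sum_(l < m) F l x) y = \sum_(l < m) Dn n (F l) y.
Proof.
rewrite DnE; under eq_bigr do rewrite mulr_sumr.
by rewrite exchange_big; apply: eq_bigr => l _; rewrite DnE.
Qed.

Lemma Dn_muln n c f y : Dn n (fun x => f x *+ c) y = Dn n f y *+ c.
Proof.
by rewrite !DnE -sumrMnl; apply: eq_bigr => r _; rewrite mulrnAr.
Qed.

Lemma Dn_ext n f g : (forall x, f x = g x) -> Dn n f = Dn n g.
Proof. by move=> H; rewrite (functional_extensionality f g H). Qed.

Lemma Dn_pow i j : (i < j)%N -> forall y, Dn j (fun x => x ^+ i) y = 0.
Proof.
elim/ltn_ind: i j => i IH [|j] // hij y.
rewrite DnSr.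
rewrite (@Dn_ext _ _ (fun x => \sum_(l < i) (fun l x => x ^+ l *+ 'C(i, l)) l x)); last first.
  move=> x; rewrite /D exprD1n big_ord_recr /= binn mulr1n addrK.
  done.
rewrite Dn_sum big1 // => l _; rewrite Dn_muln IH ?mul0rn //.
by have := ltn_ord l; lia.
Qed.

Definition A n M g y := \sum_(m < M) (-1)^+m * ('C(m + n, m))%:Z * Dn m g y.

Lemma A_shift n M g y : A n M g (y + 1) = A n M g y + A n M (D g) y.
Proof.
rewrite /A -big_split; apply: eq_bigr => m _ /=.
have -> : Dn m g (y + 1) = Dn m g y + Dn m (D g) y.
  by rewrite -DnSr DnS /D; ring.
by rewrite mulrDr.
Qed.

Lemma A_pascal n M g y : (forall z, Dn M.+1 g z = 0) ->
  A n.+1 M.+1 g y + A n.+1 M.+1 (D g) y = A n M.+1 g y.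
Proof.
move=> H.
rewrite /A big_ord_recl [X in _ + X]big_ord_recr [in RHS]big_ord_recl /=.
rewrite -DnSr H mulr0 addr0 !bin0 -addrA; congr (_ + _).
rewrite -big_split; apply: eq_bigr => s _ /=.
rewrite /bump /= !add0n add1n addSn binS -DnS DnSr addSnnS PoszD exprS; ring.
Qed.

Lemma A_base M g y : (forall z, Dn M.+1 g z = 0) ->
  A 0 M.+1 g y + A 0 M.+1 (D g) y = g y.
Proof.
move=> H.
rewrite /A big_ord_recl [X in _ + X]big_ord_recr /=.
rewrite -DnSr H mulr0 addr0 bin0 expr0 !mul1r -addrA addrC -[RHS]add0r; congr (_ + _).
rewrite -big_split big1 // => s _ /=.
rewrite /bump /= !add0n add1n !addn0 !binn -DnS DnSr exprS; ring.
Qed.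

Lemma A_main M n g : (forall z, Dn M.+1 g z = 0) ->
  forall x, A n M.+1 g (x + n%:Z + 1) = g x.
Proof.
elim: n g => [|n IH] g H x.
  by rewrite addr0 A_shift A_base.
have HD : forall z, Dn M.+1 (D g) z = 0.
  by move=> z; rewrite -DnSr DnS /D !H subrr.
rewrite -[n.+1]addn1 PoszD addrA A_shift addn1 A_pascal //.
exact: IH.
Qed.

Lemma sq1 a : (-1)^+a * (-1)^+a = 1 :> int.
Proof. by rewrite -expr2 sqrr_sign. Qed.

Lemma sgnB a m : (m <= a)%N -> (-1)^+(a - m) = (-1)^+a * (-1)^+m :> int.
Proof. by move=> h; rewrite -{2}(subnK h) exprD -mulrA sq1 mulr1. Qed.

Lemma sgnB' a m : (m <= a)%N -> (-1)^+m = (-1)^+a * (-1)^+(a - m) :> int.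
Proof. by move=> h; rewrite -{1}(subnK h) exprD mulrAC sq1 mul1r. Qed.

Lemma bE i j k : b i j k = Dn j (fun x => x ^+ i) k.
Proof.
rewrite DnE /b big_mkord; apply: eq_bigr => r _.
by rewrite [k + _]addrC; ring.
Qed.

Lemma bsym i j k : b i j (- j%:Z - k) = (-1)^+(i + j) * b i j k.
Proof.
rewrite /b !big_mkord (reindex_inj rev_ord_inj) /= mulr_sumr; apply: eq_bigr => s _.
rewrite subSS bin_sub ?leq_ord // subKn ?leq_ord // -subzn ?leq_ord //.
rewrite (_ : j%:Z - s%:Z + (- j%:Z - k) = -(s%:Z + k)); last by ring.
rewrite (@sgnB' j s (leq_ord s)) (exprNn (s%:Z + k)) exprD; ring.
Qed.

Theorem mainTheorem13 (i j : nat) (k : int)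
    (hij : (j <= i)%N) (hk : 1 - j%:Z <= k) :
  (\sum_(j <= r < i.+1)
      (-1) ^+ (i - r)%N * (binomial (absz (r%:Z + k - 1)%R) (r - j)%N)%:Z * b i r k
    = b i j 0)
  /\
  (\sum_(j <= r < i.+1)
      (-1) ^+ (i - r)%N * (binomial (absz (r%:Z + k - 1)%R) (r - j)%N)%:Z * b i r 0
    = b i j k).
Proof.
set f := fun x : int => x ^+ i.
set n := absz (j%:Z + k - 1)%R.
set g := Dn j f.
have hn : n%:Z = j%:Z + k - 1 by rewrite /n; lia.
have Hg : forall z, Dn (i - j).+1 g z = 0.
  move=> z; rewrite /g /Dn -iterD -/(Dn _ f) addSn subnK //.
  exact: Dn_pow.
have Hsum : forall y, \sum_(j <= r < i.+1)
      (-1) ^+ (i - r)%N * (binomial (absz (r%:Z + k - 1)%R) (r - j)%N)%:Z * b i r y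
      = (-1)^+(i - j) * A n (i - j).+1 g y.
  move=> y; rewrite -{1}(add0n j) big_addn subSn // big_mkord /A mulr_sumr.
  apply: eq_bigr => m _.
  rewrite addnK (_ : (m + j)%N%:Z + k - 1 = (m + n)%N%:Z); last by rewrite !PoszD hn; ring.
  rewrite absz_nat bE /g /Dn iterD -/(Dn _ _) addnC subnDA (@sgnB (i - j) m (ltn_ord m)).
  ring.
have Hsg : (-1)^+(i - j) * (-1)^+(i + j) = 1 :> int.
  by rewrite -exprD (_ : (i - j + (i + j) = i * 2)%N) ?exprM ?sqrr_sign //; lia.
split; rewrite Hsum.
  rewrite (_ : k = - j%:Z + n%:Z + 1); last by rewrite hn; ring.
  rewrite A_main // /g -bE -[X in b i j X]subr0 bsym mulrA Hsg mul1r.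
  done.
rewrite (_ : 0 = - j%:Z - k + n%:Z + 1); last by rewrite hn; ring.
by rewrite A_main // /g -bE bsym mulrA Hsg mul1r.
Qed.
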